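(* Let $X=\{X^1,\dots,X^m\}\subseteq S_n$ and let $M_X$ be the $m\times n$ real matrix whose $i$-th row is $X^i$. If the columns of $M_X$ are linearly dependent over $\mathbb{R}$, then $\mathrm{Elim}(X)\neq S_n$. In particular, if $\mathrm{Elim}(X)=S_n$ and $|X|=n$, then $X^1,\dots,X^n$ are linearly independent.
   Context: $S_n$ is the set of all nonzero $n$-tuples in $\{-1,0,1\}^n$ whose first nonzero entry equals $1$. A tuple $t=(t_1,\dots,t_n)\in\{1,0,-1,u\}^n$ ($u$ a formal symbol) eliminates $s\in S_n$ if: (i) $t_i\neq0$ and $s_i\neq0$ for some $i$; (ii) there is $k\in\{+1,-1\}$ with $t_i=ks_i$ for all $i$ with $s_i\neq0$ and $t_i\neq0$; (iii) $s_i=0$ whenever $t_i=u$. For $X\subseteq S_n$, $\mathrm{Elim}(X)$ is the set of elements of $S_n$ eliminated by at least one element of $X$. *)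

(* Defs.v *)
From HB Require Import structures.
From mathcomp Require Import all_boot all_order all_algebra.
Set Implicit Arguments. Unset Strict Implicit. Unset Printing Implicit Defensive.
Import Order.TTheory GRing.Theory Num.Theory.
Local Open Scope ring_scope.

(* An n-tuple over {-1,0,1} is represented as s : 'I_n -> int. *)
Definition trit (z : int) : bool := (z == -1) || (z == 0) || (z == 1).

Definition inS (n : nat) (s : 'I_n -> int) : Prop :=
  (forall i, trit (s i)) /\
  (exists i : 'I_n, s i = 1 /\ forall j : 'I_n, (j < i)%N -> s j = 0).

(* Elimination tuples over {1,0,-1,u}: None stands for the formal symbol u,
   Some z for z \in {-1,0,1}. *)
Definition eliminates (n : nat) (t : 'I_n -> option int) (s : 'I_n -> int) : Prop :=
  (exists i, t i <> Some 0 /\ s i != 0) /\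
  (exists k : int, (k = 1 \/ k = -1) /\
     forall i, s i != 0 -> t i <> Some 0 -> t i = Some (k * s i)) /\
  (forall i, t i = None -> s i = 0).

Definition as_tuple (n : nat) (x : 'I_n -> int) : 'I_n -> option int :=
  fun i => Some (x i).

Definition inElim (n m : nat) (X : 'I_m -> 'I_n -> int) (s : 'I_n -> int) : Prop :=
  inS s /\ exists i : 'I_m, eliminates (as_tuple (X i)) s.

Definition ElimFull (n m : nat) (X : 'I_m -> 'I_n -> int) : Prop :=
  forall s : 'I_n -> int, inS s <-> inElim X s.

Definition MX (R : realFieldType) (n m : nat) (X : 'I_m -> 'I_n -> int) : 'M[R]_(m, n) :=
  \matrix_(i < m, j < n) ((X i j)%:~R).

(* Main.v *)
Require Import Defs.
From HB Require Import structures.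
From mathcomp Require Import all_boot all_order all_algebra.
Import GRing.Theory Num.Theory.
Local Open Scope ring_scope.

Lemma sgz_mulr {R : realFieldType} (x : R) : (sgz x)%:~R * x = `|x|.
Proof. by case: sgzP; rewrite ?mul1r ?mul0r ?mulN1r ?normr0. Qed.

Lemma sgz_trit {R : realFieldType} (x : R) : trit (sgz x).
Proof. by rewrite /trit; case: sgzP. Qed.

Lemma part1 (R : realFieldType) (n m : nat) (X : 'I_m -> 'I_n -> int) :
  (exists c : 'cV[R]_n, c != 0 /\ MX R X *m c = 0) -> ~ ElimFull X.
Proof.
move=> [c [cn0 Hc]] HE.
have [j1 Hj1] : exists j, c j 0 != 0.
  apply/existsP; apply: contraR cn0 => /existsPn H; apply/eqP/matrixP => i j.
  by rewrite (ord1 j) mxE; move: (H i); rewrite negbK => /eqP.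
case: (@arg_minnP _ j1 (fun j : 'I_n => c j 0 != 0) (fun j : 'I_n => val j) Hj1) => j0 Hj0 Hmin.
pose e := sgz (c j0 0).
have e2 : e * e = 1 by rewrite /e mulz_sg Hj0.
pose s := fun j => e * sgz (c j 0).
have sS : inS s.
  split.
    move=> j; rewrite /s /e; move: (sgz_trit (c j0 0)) (sgz_trit (c j 0)).
    by rewrite /trit => /orP[/orP[]|] /eqP -> /orP[/orP[]|] /eqP ->.
  exists j0; split; first by rewrite /s -/e.
  move=> j Hj; rewrite /s; apply/eqP; rewrite mulf_eq0 sgz_eq0; apply/orP; right.
  apply: contraT; rewrite sgz_eq0 => Hc0; have := Hmin j Hc0; by rewrite leqNgt Hj.
have [_ [i [[i0 [Ht0 Hs0]] [[k [Hk Hkt]] _]]]] := (proj1 (HE s)) sS.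
rewrite /as_tuple in Ht0 Hkt.
have Hx0 : X i i0 != 0.
  by apply/negP => /eqP E; apply: Ht0; rewrite E.
have Hc0 : c i0 0 != 0.
  by move: Hs0; rewrite /s mulf_eq0 !sgz_eq0 negb_or => /andP[_ ->].
have Hrow : (MX R X *m c) i 0 = 0 by rewrite Hc mxE.
rewrite mxE in Hrow.
pose T := fun j => if X i j == 0 then (0 : R) else `|c j 0|.
have Hterm : forall j, MX R X i j * c j 0 = (k * e)%:~R * T j.
  move=> j; rewrite /MX mxE /T; case: eqP => [->|/eqP Xn0]; first by rewrite !mulr0 mul0r.
  have [->|cn] := eqVneq (c j 0) 0; first by rewrite normr0 !mulr0.
  have sn : s j != 0 by rewrite /s mulf_neq0 ?sgz_eq0 // /e sgz_eq0.
  have : Some (X i j) = Some (k * s j) by apply: Hkt => // - [] E; move: Xn0; rewrite E.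
  case=> ->; change (s j) with (e * sgz (c j 0)); by rewrite mulrA intrM -mulrA sgz_mulr.
move: Hrow; under eq_bigr => j _ do rewrite Hterm.
rewrite -mulr_sumr => /eqP; rewrite mulf_eq0 => /orP[].
  rewrite intr_eq0 mulf_eq0 => /orP[/eqP Ek|/eqP Ee].
    by case: Hk; rewrite Ek.
  by move: e2; rewrite Ee mul0r.
move=> /eqP Hs.
have Tge : forall j, xpredT j -> 0 <= T j by move=> j _; rewrite /T; case: ifP.
have := @psumr_eq0P R _ xpredT T Tge Hs i0 isT.
by rewrite /T (negbTE Hx0) => /eqP; rewrite normr_eq0 (negbTE Hc0).
Qed.

Theorem mainTheorem4 (R : realFieldType) (n m : nat) (X : 'I_m -> 'I_n -> int)
    (Xinj : injective X) (XS : forall i, inS (X i)) :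
  ((exists c : 'cV[R]_n, c != 0 /\ MX R X *m c = 0) -> ~ ElimFull X) /\
  (ElimFull X -> m = n -> forall a : 'rV[R]_m, a *m MX R X = 0 -> a = 0).
Proof.
split; first exact: part1.
move=> HE Emn; subst m => a Ha; apply/eqP/negPn/negP => an0.
have /det0P [v vn0 Hv] : \det (MX R X)^T == 0.
  by rewrite det_tr; apply/det0P; exists a.
apply: (@part1 R _ _ X _ HE); exists v^T; split.
  by rewrite trmx_eq0.
by rewrite -(trmxK (MX R X)) -trmx_mul Hv trmx0.
Qed.
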